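(* For every integer $n\ge1$, \[ \sum_{k=1}^{n}2^{k-1}\omega(n-k)=\sum_{\substack{m+k=n\\ m\ge1,\ k\ge0}}c_\psi(m)\,\Omega_m(k). \]
   Context: A composition of $n$ is an ordered sequence $(a_1,\dots,a_r)$ of positive integers with $a_1+\dots+a_r=n$; it is relatively prime if $\gcd(a_1,\dots,a_r)=1$. $c_\psi(n)$ is the number of relatively prime compositions of $n$. $\omega:\mathbb{Z}\to\mathbb{Z}$ is defined by $\omega(0)=1$; $\omega(m)=(-1)^j$ if $m=\frac{3j^2\pm j}{2}$ for some integer $j\ge1$; $\omega(m)=0$ otherwise (in particular for $m<0$). For $m\ge1$ and integer $k$, $\Omega_m(k)=\sum_{j\ge0}\omega(k-jm)=\omega(k)+\omega(k-m)+\omega(k-2m)+\cdots$. *)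

(* Defs.v *)
From mathcomp Require Import all_boot all_order all_algebra.
Set Implicit Arguments. Unset Strict Implicit. Unset Printing Implicit Defensive.
Import Order.TTheory GRing.Theory Num.Theory.
Local Open Scope ring_scope.

Fixpoint comps_aux (fuel n : nat) : seq (seq nat) :=
  match fuel with
  | O => [:: [::]]
  | S f => if n == 0%N then [:: [::]]
           else flatten [seq [seq a :: s | s <- comps_aux f (n - a)]
                        | a <- iota 1 n]
  end.
Definition comps (n : nat) : seq (seq nat) := comps_aux n n.

Definition is_composition (n : nat) (s : seq nat) : bool :=
  all (fun a => 0 < a)%N s && (sumn s == n).

Definition gcd_seq (s : seq nat) : nat := foldr gcdn 0%N s.

Definition c_psi (n : nat) : nat :=
  count (fun s => gcd_seq s == 1%N) (comps n).

(* omega(0)=1; omega(m)=(-1)^j if m = (3j^2 +- j)/2 for some j>=1; 0 otherwise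
   (in particular omega(m)=0 for m<0). Such j satisfies j <= m. *)
Definition pent_index (M : nat) (j : nat) : bool :=
  (0 < j)%N && ((2 * M == 3 * j * j + j)%N || (2 * M == 3 * j * j - j)%N).

Definition omega (m : int) : int :=
  if m == 0 then 1
  else if m < 0 then 0
  else match [pick j : 'I_(`|m|%N.+1) | pent_index `|m|%N j] with
       | Some j => (-1) ^+ (nat_of_ord j)
       | None => 0
       end.

(* Omega_m(k) = sum_{j>=0} omega(k - j m); terms vanish once k - j m < 0,
   so for m >= 1 and k >= 0 the sum over 0 <= j <= k is the full sum. *)
Definition Omega (m : nat) (k : int) : int :=
  \sum_(0 <= j < `|k|%N.+1) omega (k - (j * m)%:Z).

(* Main.v *)
Require Import Defs.
From mathcomp Require Import all_boot all_order all_algebra zify.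
Import Order.TTheory GRing.Theory Num.Theory.

Lemma allpairs_in (s : seq nat) (t1 t2 : nat -> seq (seq nat)) :
  {in s, t1 =1 t2} ->
  flatten [seq [seq a :: x | x <- t1 a] | a <- s] = flatten [seq [seq a :: x | x <- t2 a] | a <- s].
Proof. by move=> h; congr flatten; apply/eq_in_map => a /h ->. Qed.

Lemma comps_auxSE f m : comps_aux f.+1 m =
  if m == 0%N then [:: [::]] else [seq a :: s | a <- iota 1 m, s <- comps_aux f (m - a)].
Proof. by []. Qed.

Lemma comps_aux_S f m : (m <= f)%N -> comps_aux f m = comps_aux f.+1 m.
Proof.
elim: f m => [|f IH] m hm.
  by move: hm; rewrite leqn0 => /eqP ->.
rewrite comps_auxSE [RHS]comps_auxSE; case: eqP => // m0.
refine (allpairs_in _ _ _ _) => a; rewrite mem_iota => /andP [ha1 ha2].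
by rewrite IH //; lia.
Qed.

Lemma comps_auxE f m : (m <= f)%N -> comps_aux f m = comps m.
Proof.
move=> hm; rewrite /comps; elim: f hm => [|f IH] hm.
  by move: hm; rewrite leqn0 => /eqP ->.
case: (ltnP m f.+1) => h.
  by rewrite -comps_aux_S ?IH.
by have -> : m = f.+1 by apply/eqP; rewrite eqn_leq hm h.
Qed.

Lemma comps0 : comps 0 = [:: [::]]. Proof. by []. Qed.

Lemma comps_S m : (0 < m)%N ->
  comps m = flatten [seq [seq a :: s | s <- comps (m - a)] | a <- iota 1 m].
Proof.
move=> hm; rewrite /comps; case: m hm => // m _.
rewrite comps_auxSE.
change (m.+1 == 0%N) with false.
refine (allpairs_in _ _ _ _) => a; rewrite mem_iota => /andP [ha1 ha2].
by rewrite comps_auxE //; lia.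
Qed.

Lemma size_compsS m : size (comps m.+1) = sumn [seq size (comps (m.+1 - a)) | a <- iota 1 m.+1].
Proof.
rewrite comps_S // size_flatten /shape -map_comp; congr sumn.
by apply: eq_map => a /=; rewrite size_map.
Qed.

Lemma sumn_cons x s : sumn (x :: s) = x + sumn s. Proof. by []. Qed.

Lemma size_comps m : (0 < m)%N -> size (comps m) = 2 ^ m.-1.
Proof.
case: m => // m _; elim: m => [|m IH]; first by [].
rewrite size_compsS (_ : iota 1 m.+2 = 1 :: map (addn 1) (iota 1 m.+1)); last by rewrite -iotaDl.
rewrite map_cons sumn_cons subn1 [_.-1]/= IH expnS mul2n -addnn; congr addn.
rewrite -IH size_compsS -map_comp; congr sumn.
Qed.

Lemma mem_comps m s : (s \in comps m) = (all (fun a => 0 < a)%N s && (sumn s == m)).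
Proof.
elim/ltn_ind: m s => m IH s.
case: (posnP m) => [->|hm].
  rewrite comps0 inE; case: s => [|a t] //=.
  by case: a => // a; rewrite addSn andbF. 
rewrite comps_S //; apply/idP/idP.
  move/flattenP => [l /mapP [a ha ->] /mapP [t ht ->]].
  move: ha; rewrite mem_iota => /andP [ha1 ha2].
  rewrite IH in ht; last by lia.
  move: ht => /andP [hp /eqP hs] /=; rewrite hp ha1 /=; apply/eqP; lia.
case: s => [|a t]; first by move=> /andP [_ /eqP hs]; move: hm; rewrite -hs.
move=> /= /andP [/andP [ha hp] /eqP hs].
apply/flattenP; exists [seq a :: x | x <- comps (m-a)].
  apply/mapP; exists a => //; rewrite mem_iota; apply/andP; split; lia.
apply/mapP; exists t => //; rewrite IH; last by lia.
by rewrite hp /=; apply/eqP; lia.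
Qed.

Lemma uniq_comps m : uniq (comps m).
Proof.
elim/ltn_ind: m => m IH.
case: (posnP m) => [->|hm]; first by rewrite comps0.
rewrite comps_S //.
apply: allpairs_uniq_dep.
- exact: iota_uniq.
- move=> a; rewrite mem_iota => /andP [ha1 ha2]; apply: IH; lia.
- by move=> [a x] [b y] _ _ /= [-> ->].
Qed.

Lemma gcd_seq_cons a s : gcd_seq (a :: s) = gcdn a (gcd_seq s). Proof. by []. Qed.

Lemma gcd_seq_dvd s a : a \in s -> gcd_seq s %| a.
Proof.
elim: s => // b s IH; rewrite inE gcd_seq_cons => /orP [/eqP ->|h].
  exact: dvdn_gcdl.
exact: dvdn_trans (dvdn_gcdr _ _) (IH h).
Qed.

Lemma gcd_seq_sum s : gcd_seq s %| sumn s.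
Proof.
elim: s => // b s IH; rewrite gcd_seq_cons sumn_cons.
by apply: dvdn_add; [exact: dvdn_gcdl | exact: dvdn_trans (dvdn_gcdr _ _) IH].
Qed.

Lemma gcd_seq_map g t : gcd_seq (map (muln g) t) = g * gcd_seq t.
Proof.
elim: t => [|b t IH]; first by rewrite /= muln0.
by rewrite map_cons !gcd_seq_cons IH muln_gcdr.
Qed.

Lemma sumn_mapM g t : sumn (map (muln g) t) = g * sumn t.
Proof.
elim: t => [|b t IH]; first by rewrite /= muln0.
by rewrite map_cons !sumn_cons IH mulnDr.
Qed.

Lemma count_gcd g q : (0 < g)%N ->
  count (fun s => gcd_seq s == g) (comps (g * q)) = c_psi q.
Proof.
move=> hg; rewrite /c_psi -!size_filter.
rewrite -[RHS](size_map (map (muln g))); apply: perm_size.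
apply: uniq_perm.
- exact: filter_uniq (uniq_comps _).
- rewrite map_inj_uniq ?filter_uniq ?uniq_comps //.
  by apply: inj_map => u v /eqP; rewrite eqn_pmul2l // => /eqP.
move=> x; rewrite mem_filter mem_comps; apply/idP/idP.
  move=> /andP [/eqP hx /andP [hp /eqP hs]].
  have hd : forall a, a \in x -> g %| a by move=> a ha; rewrite -hx; apply: gcd_seq_dvd.
  have ex : x = map (muln g) (map (divn^~ g) x).
    rewrite -map_comp -[LHS]map_id; apply/eq_in_map => a ha /=.
    by rewrite mulnC divnK // hd.
  apply/mapP; exists (map (divn^~ g) x) => //.
  rewrite mem_filter mem_comps; apply/and3P; split.
  - by rewrite -(eqn_pmul2l hg) -gcd_seq_map -ex hx muln1.
  - apply/allP => b /mapP [a ha ->]; rewrite divn_gt0 //.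
    by apply: dvdn_leq; [exact: (allP hp) | exact: hd].
  - by rewrite -(eqn_pmul2l hg) -sumn_mapM -ex hs.
move=> /mapP [t]; rewrite mem_filter mem_comps => /and3P [/eqP ht hp /eqP hs] ->.
rewrite gcd_seq_map ht muln1 eqxx sumn_mapM hs eqxx andbT /=.
by apply/allP => b /mapP [a /(allP hp) ha ->]; rewrite muln_gt0 hg.
Qed.

Lemma sum_eq1_nat n x : \sum_(1 <= i < n.+1) (i == x : nat) = ((1 <= x) && (x <= n)).
Proof.
elim: n => [|n IH]; first by rewrite big_geq //; case: x => [|[]].
rewrite big_nat_recr //= IH.
case: (eqVneq n.+1 x) => [<-|hx] /=; first by rewrite ltnn ltnSn.
rewrite addn0; congr (nat_of_bool _).
apply/andP/andP => [] [h1 h2]; split => //; lia.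
Qed.

Lemma cond_eq k g d : (0 < k)%N -> (0 < d)%N -> g %| k ->
  ((d %| k) && (g == k %/ d)) = (d == k %/ g).
Proof.
move=> hk hd /dvdnP [q hq].
have hg : (0 < g)%N by case: g hq => [|g] hq //; move: hk; rewrite hq muln0.
have hq0 : (0 < q)%N by case: q hq => [|q] hq //; move: hk; rewrite hq.
rewrite hq mulnK //; apply/andP/eqP.
  case=> /dvdnP [e he] /eqP hg'.
  rewrite he mulnK // in hg'; rewrite hg' in he.
  have he0 : (0 < e)%N by rewrite -hg'.
  by apply/eqP; rewrite -(eqn_pmul2l he0) -he mulnC.
by move=> ->; rewrite dvdn_mulr // mulKn.
Qed.

Lemma count_identity n k : (1 <= k <= n)%N ->
  2 ^ k.-1 = \sum_(1 <= m < n.+1) (m %| k) * c_psi m.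
Proof.
move=> /andP [hk hkn].
rewrite -size_comps // -sum1_size.
rewrite (eq_big_seq (fun s => \sum_(1 <= d < n.+1) ((d %| k) && (gcd_seq s == k %/ d) : nat))).
  rewrite exchange_big; apply: eq_big_nat => d /andP [hd hdn].
  case: (boolP (d %| k)) => hdk.
    rewrite mul1n.
    have -> : c_psi d = count (fun s => gcd_seq s == k %/ d) (comps (k %/ d * d)).
      by rewrite count_gcd // divn_gt0 // dvdn_leq.
    rewrite divnK // -sum1_count [RHS]big_mkcond.
    by apply: eq_bigr => s _; case: (_ == _).
  by rewrite big1.
move=> s; rewrite mem_comps => /andP [hp /eqP hs].
have hgk : gcd_seq s %| k by rewrite -hs gcd_seq_sum.
rewrite (eq_big_nat _ _ (F2 := fun d => (d == k %/ gcd_seq s : nat))); last first.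
  by move=> d /andP [hd _]; rewrite cond_eq.
rewrite sum_eq1_nat.
have hg : (0 < gcd_seq s)%N by case: (gcd_seq s) hgk => //; rewrite dvd0n; lia.
by rewrite divn_gt0 // dvdn_leq // (leq_trans (leq_div _ _) hkn).
Qed.
Local Open Scope ring_scope.

Lemma omega_neg x : x < 0 -> omega x = 0.
Proof. by move=> hx; rewrite /omega (negbTE (ltr0_neq0 hx)) hx. Qed.

Lemma sum_eq1_int n x (G : nat -> int) :
  \sum_(1 <= i < n.+1) (if i == x then G i else 0) = if (1 <= x <= n)%N then G x else 0.
Proof.
elim: n => [|n IH]; first by rewrite big_geq //; case: x => [|[]].
rewrite big_nat_recr //= IH.
case: (eqVneq n.+1 x) => [<-|hx]; first by rewrite ltnn ltnSn add0r.
rewrite addr0 (_ : (0 < x <= n)%N = (0 < x <= n.+1)%N) //.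
apply/andP/andP => [] [h1 h2]; split => //; lia.
Qed.

Lemma Omega_eq n m : (1 <= m <= n)%N ->
  Omega m (n%:Z - m%:Z) = \sum_(1 <= j < n.+1) omega (n%:Z - (j * m)%N%:Z).
Proof.
move=> /andP [hm hmn]; rewrite /Omega subzn // absz_nat.
rewrite [RHS](big_cat_nat _ (n := (n - m).+2)) //=; last by lia.
have -> : \sum_((n - m).+2 <= j < n.+1) omega (n%:Z - (j * m)%N%:Z) = 0.
  rewrite big_nat_cond big1 // => j /andP [/andP [h1 h2] _]; apply: omega_neg.
  have : (n < j * m)%N by nia.
  lia.
rewrite addr0 big_add1 /=; apply: eq_bigr => j _; congr omega.
rewrite mulSn; lia.
Qed.

Lemma Omega_div n m : (1 <= m)%N ->
  \sum_(1 <= j < n.+1) omega (n%:Z - (j * m)%N%:Z) =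
  \sum_(1 <= k < n.+1) (if (m %| k)%N then omega (n%:Z - k%:Z) else 0).
Proof.
move=> hm.
rewrite [RHS](eq_big_nat _ _ (F2 := fun k => \sum_(1 <= j < n.+1)
           (if k == (j * m)%N then omega (n%:Z - k%:Z) else 0))); last first.
  move=> k /andP [hk hkn].
  case: (boolP (m %| k)%N) => hmk.
    have [q hq] := dvdnP hmk.
    rewrite (eq_bigr (fun j => if j == q then omega (n%:Z - k%:Z) else 0)).
      rewrite sum_eq1_int.
      have hq1 : (1 <= q)%N by case: q hq => [|q] // hq; move: hk; rewrite hq.
      have -> : (q <= n)%N by nia.
      by rewrite hq1.
    by move=> j _; rewrite hq eqn_pmul2r // eq_sym.
  rewrite big1 // => j _; case: eqP => // hj.
  by move: hmk; rewrite hj dvdn_mull.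
rewrite exchange_big_nat; apply: eq_big_nat => j /andP [hj hjn].
rewrite sum_eq1_int; case: ifP => // /negbT.
rewrite muln_gt0 hj hm /= -ltnNge => hlt.
by rewrite omega_neg //; lia.
Qed.

Theorem mainTheorem10 (n : nat) (hn : (1 <= n)%N) :
  \sum_(1 <= k < n.+1) (2 ^ (k - 1))%:Z * omega (n%:Z - k%:Z)
  = \sum_(1 <= m < n.+1) (c_psi m)%:Z * Omega m (n%:Z - m%:Z).
Proof.
rewrite (eq_big_nat _ _ (F2 := fun k => \sum_(1 <= m < n.+1)
           ((m %| k)%N * c_psi m)%N%:Z * omega (n%:Z - k%:Z))); last first.
  move=> k /andP [hk hkn].
  rewrite subn1 (count_identity n k) ?hk //.
  by rewrite (big_morph Posz PoszD (erefl _)) mulr_suml.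
rewrite exchange_big_nat; apply: eq_big_nat => m /andP [hm hmn].
rewrite Omega_eq ?hm // Omega_div // mulr_sumr; apply: eq_bigr => k _.
by case: (m %| k)%N; rewrite ?mul1n ?mul0n ?mul0r ?mulr0 // mulrC.
Qed.
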